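(* In Zhu's algebra $A(M(1)^+)$ (writing $\omega$, $J$ for $[\omega]$, $[J]$ and products for $*$), $$J^2=p(\omega)+q(\omega)J,$$ where $p(x)=\frac{1816}{35}x^4-\frac{212}{5}x^3+\frac{89}{10}x^2-\frac{27}{70}x$ and $q(x)=-\frac{314}{35}x^2+\frac{89}{14}x-\frac{27}{70}$. Equivalently, $$(J+\omega-4\omega^2)(70J+908\omega^2-515\omega+27)=0.$$
   Context: Let $\mathfrak h=\mathbb C h$ with $\langle h,h\rangle=1$, Heisenberg algebra $[h(m),h(n)]=m\delta_{m+n,0}$. Let $M(1)=\mathbb C[h(-1),h(-2),\dots]\mathbf 1$ be the Heisenberg vertex operator algebra of central charge 1 (vacuum $\mathbf 1$, $Y(h(-1)\mathbf 1,z)=\sum_nh(n)z^{-n-1}$, vertex operators of monomials given by normally ordered products of derivatives of $h(z)$), with conformal vector $\omega=\frac12h(-1)^2\mathbf 1$. Let $\theta$ be the automorphism acting by $(-1)^k$ on monomials $h(-n_1)\cdots h(-n_k)\mathbf 1$ and $M(1)^+$ its fixed-point vertex operator subalgebra. Let $J=h(-1)^4\mathbf 1-2h(-3)h(-1)\mathbf 1+\frac32h(-2)^2\mathbf 1$. Zhu's algebra: for a vertex operator algebra $V$, homogeneous $u$ and $v\in V$ with $Y(u,z)=\sum u_nz^{-n-1}$, set $u*v=\sum_{i\ge0}\binom{\mathrm{wt}(u)}{i}u_{i-1}v$ and $u\circ v=\sum_{i\ge0}\binom{\mathrm{wt}(u)}{i}u_{i-2}v$; $O(V)$ is the span of all $u\circ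 v$, and $A(V)=V/O(V)$ is an associative algebra (with unit $[\mathbf 1]$) under the product induced by $*$; $[v]=v+O(V)$. *)

(* Defs.v *)
From HB Require Import structures.
From mathcomp Require Import all_boot all_order all_algebra.
From mathcomp Require Import finmap.
From mathcomp.multinomials Require Import monalg.
Set Implicit Arguments. Unset Strict Implicit. Unset Printing Implicit Defensive.
Import Order.TTheory GRing.Theory Num.Theory.
Local Open Scope ring_scope.

(* The Heisenberg VOA M(1) = C[h(-1),h(-2),...]1 (we use the rationals as    *)
(* coefficient field: all structure constants are rational, and membership  *)
(* in O(V) for rational vectors is the same over Q and C by linear algebra; *)
(* monomial  x_{n_1-1} ... x_{n_k-1}  in the variables x_i, i : nat, i.e.   *)
(* variable x_i stands for h(-(i+1)).                                       *)
Definition K := cmonom nat.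
Definition V := {malg rat[K]}.

Definition mwt (m : K) : nat := (\sum_(i <- finsupp m) m i * i.+1)%N.

Definition hlist (m : K) : seq nat :=
  flatten [seq nseq (m i) i.+1 | i <- finsupp m].

Definition vwt (v : V) : nat := (\max_(k <- msupp v) mwt k)%N.

Definition hx (i : nat) : V := << ucm i >>.

Definition dx (i : nat) (v : V) : V :=
  \sum_(k <- msupp v) (v@_k * (k i)%:R) *: << divcm k (ucm i) >>.

(* Heisenberg modes on M(1): h(-n) = multiplication by x_{n-1} (n > 0),
   h(n) = n d/dx_{n-1} (n > 0), h(0) = 0.  [h(m),h(n)] = m delta_{m+n,0}. *)
Definition hop (n : int) (v : V) : V :=
  match n with
  | Posz 0 => 0
  | Posz n'.+1 => n'.+1%:R *: dx n' v
  | Negz n' => hx n' * v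
  end.

Definition nop (ms : seq int) (v : V) : V :=
  foldr hop (foldr hop v [seq m <- ms | 0 <= m]) [seq m <- ms | m < 0].

Definition zbinom (a : int) (k : nat) : rat :=
  (\prod_(i < k) (a%:~R - i%:R)) / (k`!)%:R.

Fixpoint tuples (r : seq int) (k : nat) : seq (seq int) :=
  if k is k'.+1 then [seq x :: t | x <- r, t <- tuples r k'] else [:: [::]].

(* Mode u_j v for a basis monomial u = h(-n_1)...h(-n_k)1, where
   Y(u,z) = : d^(n_1-1)h(z) ... d^(n_k-1)h(z) :,  d^(n-1) = (1/(n-1)!) (d/dz)^(n-1),
   d^(n-1)h(z) = sum_m binom(-m-1,n-1) h(m) z^(-m-n).  Hence
   u_j v = sum_{m_1+..+m_k = j+1-wt u} prod_i binom(-m_i-1,n_i-1) :h(m_1)..h(m_k): v.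
   All terms with some m_i outside [L, W] vanish (W = max weight in v, and
   L = (j+1-wt u) - k W), so the (a priori infinite) sum is the finite one below. *)
Definition mono_mode (u : K) (j : int) (v : V) : V :=
  let ns := hlist u in
  let k := size ns in
  let W := vwt v in
  let s := j + 1 - (mwt u)%:Z in
  let L := s - (k * W)%N%:Z in
  let r := if L <= W%:Z then [seq L + i%:Z | i <- iota 0 (absz (W%:Z + 1 - L)%R)]
           else [::] in
  \sum_(ms <- tuples r k | \sum_(x <- ms) x == s)
     (\prod_(p <- zip ms ns) zbinom (- p.1 - 1) p.2.-1) *: nop ms v.

(* Y(u,z) = sum_j u_j z^(-j-1), extended linearly in u *)
Definition vmode (u : V) (j : int) (v : V) : V :=
  \sum_(k <- msupp u) u@_k *: mono_mode k j v.

Definition hwt (u : V) : nat := vwt u.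
Definition homogeneous (u : V) : bool := all (fun k => mwt k == hwt u) (msupp u).

Definition zstar (u v : V) : V :=
  \sum_(i < (hwt u).+1) 'C(hwt u, i)%:R *: vmode u (i%:Z - 1) v.
Definition zcirc (u v : V) : V :=
  \sum_(i < (hwt u).+1) 'C(hwt u, i)%:R *: vmode u (i%:Z - 2) v.

Definition theta (u : V) : V :=
  \sum_(k <- msupp u) ((-1) ^+ mdeg k * u@_k) *: << k >>.
Definition inVplus (u : V) : bool := theta u == u.

Definition inO_Vplus (x : V) : Prop :=
  exists s : seq (rat * V * V),
    (forall t, t \in s -> [&& homogeneous t.1.2, inVplus t.1.2 & inVplus t.2]) /\
    x = \sum_(t <- s) t.1.1 *: zcirc t.1.2 t.2.

Definition vac : V := 1.
Definition omega : V := (1 / 2) *: (hx 0 * hx 0).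
Definition Jv : V := hx 0 ^+ 4 - 2 *: (hx 2 * hx 0) + (3 / 2) *: (hx 1 * hx 1).

(* omega * (omega * ( ... * v)) with k factors omega; its class is [omega]^k [v] *)
Definition wpow (k : nat) (v : V) : V := iter k (zstar omega) v.

(* Main.v *)
Require Import Defs.
From Stdlib Require Import QArith.
From HB Require Import structures.
From mathcomp Require Import all_boot all_order all_algebra.
From mathcomp Require Import finmap.
From mathcomp.multinomials Require Import monalg.
From mathcomp Require Import zify ring ssrZ.
Import ssrZ.Instances.
Set Implicit Arguments. Unset Strict Implicit. Unset Printing Implicit Defensive.
Import Order.TTheory GRing.Theory Num.Theory.
Local Open Scope ring_scope.

Definition zr (z : Z) : rat := (int_of_Z z)%:~R.
Lemma zrD a b : zr (Z.add a b) = zr a + zr b.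
Proof. by rewrite /zr (raddfD int_of_Z a b) intrD. Qed.
Lemma zrM a b : zr (Z.mul a b) = zr a * zr b.
Proof. by rewrite /zr (rmorphM int_of_Z a b) intrM. Qed.
Lemma zrN a : zr (Z.opp a) = - zr a.
Proof. by rewrite /zr (raddfN int_of_Z a) mulrNz. Qed.
Lemma zr0 : zr Z0 = 0. Proof. by []. Qed.
Lemma zrpos p : zr (Zpos p) != 0.
Proof. rewrite /zr /int_of_Z intr_eq0 /=. apply/eqP=> h. have := Pos2Nat.is_pos p. 
  move: h; rewrite /= => -[] ->. lia. Qed.
Lemma zr_nat n : zr (Z.of_nat n) = n%:R.
Proof. by rewrite /zr -[Z.of_nat n]/(Z_of_int n) Z_of_intK. Qed.
Lemma zr_int a : zr (Z_of_int a) = a%:~R.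
Proof. by rewrite /zr Z_of_intK. Qed.

Definition q2r (q : Q) : rat := zr (Qnum q) / zr (Zpos (Qden q)).

Lemma q2r_eq x y : Qeq x y -> q2r x = q2r y.
Proof.
case: x y => [a d] [b e]; rewrite /Qeq /q2r /= => h.
have := congr1 zr h; rewrite !zrM => h'.
have hd := zrpos d; have he := zrpos e.
apply/eqP; rewrite eqr_div //; exact/eqP.
Qed.

Definition qadd x y := Qred (Qplus x y).
Definition qmul x y := Qred (Qmult x y).

Lemma q2r_red x : q2r (Qred x) = q2r x.
Proof. apply: q2r_eq; exact: Qred_correct. Qed.

Lemma q2rD x y : q2r (qadd x y) = q2r x + q2r y.
Proof.
rewrite /qadd q2r_red; case: x y => [a d] [b e]; rewrite /Qplus /q2r /=.
have hd := zrpos d; have he := zrpos e.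
rewrite zrD !zrM.
have -> : Zpos (d * e) = Z.mul (Zpos d) (Zpos e) by [].
rewrite zrM. field. by rewrite hd he.
Qed.

Lemma q2rM x y : q2r (qmul x y) = q2r x * q2r y.
Proof.
rewrite /qmul q2r_red; case: x y => [a d] [b e]; rewrite /Qmult /q2r /=.
have hd := zrpos d; have he := zrpos e.
rewrite zrM.
have -> : Zpos (d * e) = Z.mul (Zpos d) (Zpos e) by [].
rewrite zrM. field. by rewrite hd he.
Qed.

Lemma q2rN x : q2r (Qopp x) = - q2r x.
Proof. case: x => [a d]; by rewrite /q2r /= zrN mulNr. Qed.

Lemma q2rV x : q2r (Qinv x) = (q2r x)^-1.
Proof.
case: x => [[|p|p] d]; rewrite /Qinv /q2r /=.
- by rewrite zr0 !mul0r invr0.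
- by rewrite invf_div.
- have -> : Zneg d = Z.opp (Zpos d) by [].
  have -> : Zneg p = Z.opp (Zpos p) by [].
  rewrite !zrN invf_div invrN mulrN mulNr. by [].
Qed.

Lemma q2rZ z : q2r (inject_Z z) = zr z.
Proof. by rewrite /q2r /= divr1. Qed.

Lemma q2r0 x : Qnum x = Z0 -> q2r x = 0.
Proof. by case: x => a d /= ->; rewrite /q2r zr0 mul0r. Qed.

Definition qeqb (x y : Q) : bool := Z.eqb (Qnum x) (Qnum y) && Pos.eqb (Qden x) (Qden y).
Lemma qeqbP : Equality.axiom qeqb.
Proof.
case=> [a d] [b e]; rewrite /qeqb /=.
apply: (iffP andP) => [[/Z.eqb_eq -> /Pos.eqb_eq ->] //|[-> ->]].
by split; [apply/Z.eqb_eq | apply/Pos.eqb_eq].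
Qed.
HB.instance Definition _ := hasDecEq.Build Q qeqbP.

Definition mon (e : seq nat) : K :=
  [cmonom nth 0 e i | i in [fset i | i in iota 0 (size e)]]%M.

Lemma monE e j : mon e j = nth 0 e j.
Proof.
rewrite /mon cmE fsfun_fun; case: ifP => // /negbT hj.
rewrite nth_default //; rewrite leqNgt; apply: contra hj => hj.
by apply/imfsetP; exists j => //=; rewrite mem_iota.
Qed.

Lemma mon_eq e1 e2 : (forall j, nth 0 e1 j = nth 0 e2 j) -> mon e1 = mon e2.
Proof. by move=> h; apply/eqP/cmP => j; rewrite !monE. Qed.

Lemma monU i e : mulcm (ucm i) (mon e) = mon (incr_nth e i).
Proof. by apply/eqP/cmP => j; rewrite cmM cmU !monE nth_incr_nth. Qed.

Definition decr (e : seq nat) i := set_nth 0 e i (nth 0 e i).-1.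

Lemma monD i e : divcm (mon e) (ucm i) = mon (decr e i).
Proof.
apply/eqP/cmP => j; rewrite divcmE cmU !monE /decr nth_set_nth /=.
by case: (eqVneq j i) => [->|h]; rewrite ?subn1 ?subn0.
Qed.

Definition supp (e : seq nat) := [seq i <- iota 0 (size e) | nth 0 e i != 0%N].

Lemma finsupp_mon e : perm_eq (finsupp (mon e)) (supp e).
Proof.
apply: uniq_perm; first exact: fset_uniq.
  by rewrite filter_uniq // iota_uniq.
move=> j; rewrite mem_finsupp monE mem_filter mem_iota /= add0n.
case: (ltnP j (size e)) => h; first by rewrite andbT.
by rewrite nth_default // eqxx.
Qed.

Definition sumf (T : Type) (F : T -> nat) (s : seq T) : nat :=
  foldr (fun x acc => F x + acc)%N 0%N s.

Lemma sumfE (T : Type) (F : T -> nat) (s : seq T) : (\sum_(x <- s) F x)%N = sumf F s.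
Proof. by elim: s => [|x s IH]; rewrite ?big_nil ?big_cons ?IH. Qed.

Definition mwt' (e : seq nat) : nat := sumf (fun i => nth 0 e i * i.+1)%N (supp e).

Lemma mwt_mon e : mwt (mon e) = mwt' e.
Proof.
rewrite /mwt' /mwt (perm_big _ (finsupp_mon e)) /= -sumfE.
by apply: eq_bigr => i _; rewrite monE.
Qed.

Definition mdeg' (e : seq nat) : nat := sumf (fun i => nth 0 e i) (supp e).

Lemma mdeg_mon e : mdeg (mon e) = mdeg' e.
Proof.
rewrite /mdeg' /mdeg (perm_big _ (finsupp_mon e)) /= -sumfE.
by apply: eq_bigr => i _; rewrite monE.
Qed.

Definition hl (e : seq nat) : seq nat :=
  flatten [seq nseq (nth 0 e i) i.+1 | i <- supp e].

Lemma hlist_mon e : perm_eq (hlist (mon e)) (hl e).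
Proof.
rewrite /hlist /hl; apply: perm_flatten.
rewrite (eq_map (g := fun i => nseq (nth 0 e i) i.+1)); last by move=> i; rewrite monE.
exact: perm_map (finsupp_mon e).
Qed.

Definition trimmed (e : seq nat) := last 1%N e != 0%N.

Lemma mon_inj e1 e2 : trimmed e1 -> trimmed e2 -> mon e1 = mon e2 -> e1 = e2.
Proof.
move=> t1 t2 h.
have H j : nth 0 e1 j = nth 0 e2 j by rewrite -!monE h.
have gen a b : trimmed b -> (forall j, nth 0 a j = nth 0 b j) -> (size b <= size a)%N.
  move=> tb Hab; rewrite leqNgt; apply/negP => lt.
  case: b tb Hab lt => [//|x b] tb Hab lt.
  move: tb; rewrite /trimmed /= => tb.
  have := Hab (size b); rewrite nth_default; last by rewrite -ltnS.
  rewrite -[nth 0 (x :: b) (size b)]/(nth 0 (x :: b) (size (x::b)).-1) nth_last /=.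
  move=> e0; move: tb; rewrite -e0.
  by case: (b) => //.
apply: (@eq_from_nth _ 0%N).
  by apply/eqP; rewrite eqn_leq !gen //.
by move=> i _; exact: H.
Qed.

Arguments mon : simpl never.
Arguments q2r : simpl never.
Arguments qadd : simpl never.
Arguments qmul : simpl never.
Definition ql := seq (seq nat * Q).
Definition vof (l : ql) : V := \sum_(p <- l) q2r p.2 *: << mon p.1 >>.

Lemma vof_nil : vof [::] = 0. Proof. by rewrite /vof big_nil. Qed.
Lemma vof_cons p l : vof (p :: l) = q2r p.2 *: << mon p.1 >> + vof l.
Proof. by rewrite /vof big_cons. Qed.
Lemma vof_cat l1 l2 : vof (l1 ++ l2) = vof l1 + vof l2.
Proof. by rewrite /vof big_cat. Qed.

Definition scl (c : Q) (l : ql) : ql := [seq (p.1, qmul c p.2) | p <- l].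
Lemma vof_scl c l : vof (scl c l) = q2r c *: vof l.
Proof.
elim: l => [|p l IH]; first by rewrite /= vof_nil scaler0.
by rewrite /= !vof_cons IH scalerDr q2rM scalerA.
Qed.

Fixpoint trim (e : seq nat) : seq nat :=
  match e with
  | [::] => [::]
  | a :: e' => let t := trim e' in if (t == [::]) && (a == 0%N) then [::] else a :: t
  end.
Lemma nth_trim e j : nth 0 (trim e) j = nth 0 e j.
Proof.
elim: e j => [|a e IH] j //=.
case: ifP => [/andP[/eqP h /eqP ->]|_]; last by case: j.
by case: j => [|j] //=; rewrite -IH h nth_nil.
Qed.
Lemma mon_trim e : mon (trim e) = mon e.
Proof. by apply: mon_eq => j; rewrite nth_trim. Qed.

Fixpoint ins (k : seq nat) (c : Q) (acc : ql) : ql :=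
  match acc with
  | [::] => [:: (k, c)]
  | p :: acc' => if k == p.1 then (k, qadd c p.2) :: acc' else p :: ins k c acc'
  end.
Lemma vof_ins k c acc : vof (ins k c acc) = q2r c *: << mon k >> + vof acc.
Proof.
elim: acc => [|p acc IH]; first by rewrite /= vof_cons vof_nil.
rewrite [ins _ _ _]/=.
case: ifP => [/eqP e|_]; rewrite !vof_cons.
  rewrite q2rD scalerDl -addrA -[(k, qadd c p.2).1]/k. rewrite e. reflexivity.
rewrite IH. exact: (addrCA _ _ _).
Qed.

Definition qz (c : Q) : bool := Z.eqb (Qnum c) Z0.

Definition nrm (l : ql) : ql :=
  [seq p <- foldr (fun p acc => ins (trim p.1) p.2 acc) [::] l | ~~ qz p.2].
Lemma vof_nrm l : vof (nrm l) = vof l.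
Proof.
rewrite /nrm.
have -> : forall l', vof [seq p <- l' | ~~ qz p.2] = vof l'.
  elim=> [|p l' IH] //=; case: ifP => h; rewrite !vof_cons ?IH //.
  move/negbFE: h; rewrite /qz => /Z.eqb_eq h.
  by rewrite (q2r0 h) scale0r add0r.
elim: l => [|p l IH] //=.
by rewrite vof_ins vof_cons IH mon_trim.
Qed.

Definition wf (l : ql) : bool :=
  uniq (map fst l) && all (fun p => trimmed p.1 && ~~ qz p.2) l.

Lemma q2r_neq0 c : ~~ qz c -> q2r c != 0.
Proof.
case: c => [a d]; rewrite /qz /q2r /= => h.
rewrite mulf_neq0 // ?invr_eq0 ?zrpos //.
rewrite /zr intr_eq0; apply/eqP => h0.
have := congr1 Z_of_int h0; rewrite int_of_ZK /= => ha.
by move: h; rewrite ha.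
Qed.

Lemma mcoeff_vof l k : (vof l)@_k = \sum_(p <- l) q2r p.2 * (mon p.1 == k)%:R.
Proof.
elim: l => [|p l IH]; first by rewrite vof_nil big_nil mcoeff0.
by rewrite vof_cons big_cons mcoeffD mcoeffZ mcoeffU1 IH.
Qed.

Lemma wf_cons p l : wf (p :: l) ->
  [/\ p.1 \notin map fst l, trimmed p.1, ~~ qz p.2 & wf l].
Proof.
rewrite /wf map_cons cons_uniq.
set a := (fun p : seq nat * Q => _).
rewrite -[all a (p :: l)]/(a p && all a l) => /andP [/andP [pl ul] /andP [/andP [tp cp] al]].
by split => //; rewrite ul al.
Qed.

Lemma wf_trimmed l e : wf l -> e \in map fst l -> trimmed e.
Proof.
move=> /andP [_ al] /mapP [q hq ->].
by have /andP [] := allP al q hq.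
Qed.

Lemma mem_msupp_vof l : wf l ->
  forall k, (k \in msupp (vof l)) = (k \in map mon (map fst l)).
Proof.
elim: l => [|p l IH].
  by move=> _ k; rewrite vof_nil msupp0 in_fset0.
move=> w; case: (wf_cons w) => pl tp cp wl k.
rewrite -mcoeff_neq0 mcoeff_vof big_cons -mcoeff_vof.
rewrite -[map mon (map fst (p :: l))]/(mon p.1 :: map mon (map fst l)) in_cons.
case: (eqVneq (mon p.1) k) => [<-|ne].
  have -> : (vof l)@_(mon p.1) = 0.
    apply: mcoeff_outdom; rewrite IH //; apply/negP => /mapP [e he hm].
    have ee : e = p.1 by apply: mon_inj => //; exact: (wf_trimmed wl he).
    by move: pl; rewrite -ee he.
  by rewrite mulr1 addr0 q2r_neq0 // eqxx.
rewrite mulr0 add0r mcoeff_neq0 IH //.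
Qed.

Lemma uniq_mon_keys l : wf l -> uniq (map mon (map fst l)).
Proof.
move=> w; rewrite map_inj_in_uniq; first by case/andP: w.
by move=> x y hx hy; apply: mon_inj; [exact: (wf_trimmed w hx)| exact: (wf_trimmed w hy)].
Qed.

Lemma msupp_vof l : wf l -> perm_eq (msupp (vof l)) (map mon (map fst l)).
Proof.
move=> w; apply: uniq_perm; [exact: fset_uniq | exact: uniq_mon_keys | exact: mem_msupp_vof].
Qed.

Definition vwt' (l : ql) : nat := foldr (fun p acc => maxn (mwt' p.1) acc) 0%N l.

Lemma vwt_vof l : wf l -> vwt (vof l) = vwt' l.
Proof.
move=> w; rewrite /vwt (perm_big _ (msupp_vof w)) big_map big_map.
elim: (l) => [|p l' IH]; first by rewrite big_nil.
by rewrite big_cons IH mwt_mon.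
Qed.

Arguments mon : simpl never.
Arguments q2r : simpl never.
Arguments qadd : simpl never.
Arguments qmul : simpl never.

Definition lin (F : K -> V) (v : V) : V := \sum_(k <- msupp v) v@_k *: F k.

Lemma scaleU (c : rat) (m : K) : c *: (<< m >> : V) = << c *g m >>.
Proof.
apply/malgP => k. rewrite (mcoeffU m c k).
transitivity (c * (<<m>> : V)@_k); first exact: mcoeffZ.
rewrite (@mcoeffU1 K rat m k).
by case: (m == k); rewrite ?mulr1 ?mulr0.
Qed.

Lemma lin_mmap F v : lin F v = mmap (@mkmalgU K rat (@onecm nat)) F v.
Proof. by rewrite /lin mmapE; apply: eq_bigr => k _; rewrite mul_malgC. Qed.

Lemma lin_vof F l : lin F (vof l) = \sum_(p <- l) q2r p.2 *: F (mon p.1).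
Proof.
rewrite lin_mmap; elim: l => [|p l IH]; first by rewrite vof_nil big_nil mmap0.
rewrite vof_cons big_cons mmapD IH scaleU mmapU mul_malgC.
reflexivity.
Qed.

Lemma lin_cons F p l : lin F (vof (p :: l)) = q2r p.2 *: F (mon p.1) + lin F (vof l).
Proof. by rewrite !lin_vof big_cons. Qed.

Lemma lin_nil F : lin F (vof [::]) = 0.
Proof. by rewrite lin_vof big_nil. Qed.

Lemma dx_lin i v : dx i v = lin (fun k => (k i)%:R *: << divcm k (ucm i) >>) v.
Proof. rewrite /dx /lin; apply: eq_bigr => k _; exact: (esym (scalerA _ _ _)). Qed.

Definition qn (n : nat) : Q := inject_Z (Z.of_nat n).
Lemma q2r_qn n : q2r (qn n) = n%:R.
Proof. by rewrite /qn q2rZ zr_nat. Qed.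

Definition dx' (i : nat) (l : ql) : ql :=
  [seq (decr p.1 i, qmul p.2 (qn (nth 0 p.1 i))) | p <- l & nth 0 p.1 i != 0%N].

Lemma dx_vof i l : dx i (vof l) = vof (dx' i l).
Proof.
rewrite dx_lin; elim: l => [|p l IH]; first by rewrite lin_nil [dx' _ _]/= vof_nil.
rewrite lin_cons IH monE monD /dx' [filter _ (p :: l)]/=.
case: (eqVneq (nth 0 p.1 i) 0%N) => [->|ne].
  rewrite [X in _ = vof (map _ X)]/= scale0r scaler0 add0r. reflexivity.
rewrite [X in _ = vof (map _ X)]/= map_cons vof_cons.
rewrite [(decr p.1 i, _).2]/= [(decr p.1 i, _).1]/= q2rM q2r_qn scalerA.
reflexivity.
Qed.

Definition mulx' (i : nat) (l : ql) : ql := [seq (incr_nth p.1 i, p.2) | p <- l].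

Lemma hxU i e : hx i * << mon e >> = << mon (incr_nth e i) >>.
Proof. by rewrite /hx malgM_def fgmulUU mulr1 -monU. Qed.

Lemma mulx_vof i l : hx i * vof l = vof (mulx' i l).
Proof.
elim: l => [|p l IH]; first by rewrite vof_nil mulr0.
rewrite vof_cons mulrDr IH -scalerAr hxU /mulx' map_cons vof_cons.
reflexivity.
Qed.

Definition hop' (n : int) (l : ql) : ql :=
  match n with
  | Posz 0 => [::]
  | Posz n'.+1 => scl (qn n'.+1) (dx' n' l)
  | Negz n' => mulx' n' l
  end.

Lemma hop_vof n l : hop n (vof l) = vof (hop' n l).
Proof.
case: n => [[|n']|n'].
- by rewrite /= vof_nil.
- by rewrite [hop _ _]/= [hop' _ _]/= vof_scl q2r_qn dx_vof.
- by rewrite [hop _ _]/= [hop' _ _]/= mulx_vof.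
Qed.

Definition nop' (ms : seq int) (l : ql) : ql :=
  foldr hop' (foldr hop' l [seq m <- ms | 0 <= m]) [seq m <- ms | m < 0].

Lemma foldr_hop_vof s l : foldr hop (vof l) s = vof (foldr hop' l s).
Proof. by elim: s => [|n s IH] //; rewrite [LHS]/= [foldr hop' _ _]/= IH hop_vof. Qed.

Lemma nop_vof ms l : nop ms (vof l) = vof (nop' ms l).
Proof. by rewrite /nop /nop' !foldr_hop_vof. Qed.

Arguments mon : simpl never.
Arguments q2r : simpl never.
Arguments qadd : simpl never.
Arguments qmul : simpl never.

Arguments vof : simpl never.

Definition qone : Q := inject_Z (Zpos xH).
Lemma q2r1 : q2r qone = 1.
Proof. by rewrite /qone q2rZ /zr. Qed.

Definition qm1 : Q := inject_Z (Zneg xH).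
Lemma q2rm1 : q2r qm1 = -1.
Proof. by rewrite /qm1 q2rZ /zr. Qed.

Definition zbQ (a : int) (k : nat) : Q :=
  qmul (foldr (fun i acc => qmul (inject_Z (Z.sub (Z_of_int a) (Z.of_nat i))) acc) qone (iota 0 k))
       (Qinv (qn k`!)).

Lemma zbQ_ok a k : q2r (zbQ a k) = zbinom a k.
Proof.
rewrite /zbQ /zbinom q2rM q2rV q2r_qn; congr (_ / _).
rewrite -(big_mkord xpredT (fun i => a%:~R - i%:R)) /index_iota subn0.
elim: (iota 0 k) => [|i s IH]; first by rewrite big_nil q2r1.
rewrite big_cons -IH [foldr _ _ _]/= q2rM q2rZ.
by rewrite /Z.sub zrD zrN zr_int zr_nat.
Qed.

Definition prodQ (ms : seq int) (ns : seq nat) : Q :=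
  foldr (fun p acc => qmul (zbQ (- p.1 - 1) p.2.-1) acc) qone (zip ms ns).

Lemma prodQ_ok ms ns :
  q2r (prodQ ms ns) = \prod_(p <- zip ms ns) zbinom (- p.1 - 1) p.2.-1.
Proof.
rewrite /prodQ; elim: (zip ms ns) => [|p s IH]; first by rewrite big_nil q2r1.
by rewrite big_cons -IH [foldr _ _ _]/= q2rM zbQ_ok.
Qed.

Definition sumz (ms : seq int) : int := foldr (fun x acc => x + acc) 0 ms.
Lemma sumz_ok ms : sumz ms = \sum_(x <- ms) x.
Proof. by elim: ms => [|x s IH]; rewrite ?big_nil ?big_cons -?IH. Qed.

Lemma vof_flat_filter (T : Type) (s : seq T) (P : pred T) (f : T -> ql) :
  vof (flatten [seq f x | x <- s & P x]) = \sum_(x <- s | P x) vof (f x).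
Proof.
elim: s => [|x s IH]; first by rewrite big_nil [flatten _]/= vof_nil.
rewrite big_cons [filter _ _]/=; case: (P x); last exact: IH.
by rewrite map_cons [flatten _]/= vof_cat IH.
Qed.

Definition mm' (ns : seq nat) (wt : nat) (j : int) (l : ql) : ql :=
  let k := size ns in
  let W := vwt' l in
  let s := j + 1 - wt%:Z in
  let L := s - (k * W)%N%:Z in
  let r := if L <= W%:Z then [seq L + i%:Z | i <- iota 0 (absz (W%:Z + 1 - L)%R)]
           else [::] in
  nrm (flatten [seq scl (prodQ ms ns) (nop' ms l) | ms <- tuples r k & sumz ms == s]).

Lemma mm_vof e j l : wf l ->
  mono_mode (mon e) j (vof l) = vof (mm' (hlist (mon e)) (mwt' e) j l).
Proof.
move=> w; rewrite /mono_mode /mm' vwt_vof // mwt_mon vof_nrm vof_flat_filter.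
apply: congr_big => //.
  by move=> ms; rewrite sumz_ok.
by move=> ms _; rewrite vof_scl prodQ_ok nop_vof.
Qed.

Definition mm2 (e : seq nat) (j : int) (l : ql) : ql := mm' (hl e) (mwt' e) j l.

Definition qdiff (a b : ql) : bool := nrm (a ++ scl qm1 b) == [::].

Lemma qdiff_ok a b : qdiff a b -> vof a = vof b.
Proof.
move/eqP => h; apply/eqP; rewrite -subr_eq0.
have : vof (nrm (a ++ scl qm1 b)) = 0 by rewrite h vof_nil.
rewrite vof_nrm vof_cat vof_scl q2rm1 scaleN1r => ->.
by [].
Qed.

Definition ok_perm (e : seq nat) (j : int) (l : ql) : bool :=
  all (fun ns => (ns == hl e) || qdiff (mm' ns (mwt' e) j l) (mm2 e j l))
      (permutations (hl e)).

Lemma mm2_vof e j l : wf l -> ok_perm e j l ->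
  mono_mode (mon e) j (vof l) = vof (mm2 e j l).
Proof.
move=> w ok; rewrite mm_vof //.
have : hlist (mon e) \in permutations (hl e) by rewrite mem_permutations hlist_mon.
move/(allP ok) => /orP [/eqP -> //|]; exact: qdiff_ok.
Qed.

Definition vmode' (l1 : ql) (j : int) (l2 : ql) : ql :=
  nrm (flatten [seq scl p.2 (mm2 p.1 j l2) | p <- l1]).

Lemma vmode_vof l1 j l2 : wf l2 -> all (fun p => ok_perm p.1 j l2) l1 ->
  vmode (vof l1) j (vof l2) = vof (vmode' l1 j l2).
Proof.
move=> w ok; rewrite /vmode /vmode' vof_nrm.
have -> : \sum_(k <- msupp (vof l1)) (vof l1)@_k *: mono_mode k j (vof l2)
          = lin (fun k => mono_mode k j (vof l2)) (vof l1) by [].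
elim: l1 ok => [|p l IH]; first by rewrite lin_nil [flatten _]/= vof_nil.
move=> /andP [okp okl].
rewrite lin_cons IH // mm2_vof // map_cons [flatten _]/= vof_cat vof_scl.
reflexivity.
Qed.

Lemma vof_flat (T : Type) (s : seq T) (f : T -> ql) :
  vof (flatten [seq f x | x <- s]) = \sum_(x <- s) vof (f x).
Proof.
elim: s => [|x s IH]; first by rewrite big_nil [flatten _]/= vof_nil.
by rewrite big_cons map_cons [flatten _]/= vof_cat IH.
Qed.

Definition zgen' (d : int) (l1 l2 : ql) : ql :=
  let w := vwt' l1 in
  nrm (flatten [seq scl (qn 'C(w, i)) (vmode' l1 (i%:Z - d) l2) | i <- iota 0 w.+1]).

Definition ok_z (d : int) (l1 l2 : ql) : bool :=
  [&& wf l1, wf l2 &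
   all (fun i => all (fun p => ok_perm p.1 (i%:Z - d) l2) l1) (iota 0 (vwt' l1).+1)].

Lemma zgen_vof d l1 l2 : ok_z d l1 l2 ->
  \sum_(i < (hwt (vof l1)).+1) 'C(hwt (vof l1), i)%:R *: vmode (vof l1) (i%:Z - d) (vof l2)
  = vof (zgen' d l1 l2).
Proof.
case/and3P => w1 w2 ok.
rewrite /hwt /zgen' vwt_vof // vof_nrm vof_flat.
rewrite -(big_mkord xpredT (fun i => 'C(vwt' l1, i)%:R *: vmode (vof l1) (i%:Z - d) (vof l2))).
rewrite /index_iota subn0; apply: eq_big_seq => i hi.
rewrite vof_scl q2r_qn vmode_vof //; exact: (allP ok i hi).
Qed.

Lemma zstar_vof l1 l2 : ok_z 1 l1 l2 -> zstar (vof l1) (vof l2) = vof (zgen' 1 l1 l2).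
Proof. exact: zgen_vof. Qed.

Lemma zcirc_vof l1 l2 : ok_z 2 l1 l2 -> zcirc (vof l1) (vof l2) = vof (zgen' 2 l1 l2).
Proof. exact: zgen_vof. Qed.

Definition WL : ql := [:: ([:: 2%N], Qmake (Zpos xH) 2)].

Lemma omega_vof : omega = vof WL.
Proof.
rewrite /omega /WL vof_cons vof_nil addr0.
have -> : q2r (Qmake (Zpos xH) 2) = 1 / 2 by rewrite /q2r /zr.
congr (_ *: _).
rewrite /hx malgM_def fgmulUU mulr1.
congr (<< _ >>); apply/eqP/cmP => i.
by rewrite cmM cmU monE; case: i => [|[|i]].
Qed.

Fixpoint wp' (k : nat) (l : ql) : ql := if k is k'.+1 then zgen' 1 WL (wp' k' l) else l.
Fixpoint ok_wp (k : nat) (l : ql) : bool :=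
  if k is k'.+1 then ok_z 1 WL (wp' k' l) && ok_wp k' l else true.

Lemma wpow_vof k l : ok_wp k l -> wpow k (vof l) = vof (wp' k l).
Proof.
elim: k => [|k IH]; first by [].
move=> /andP [h1 h2].
rewrite -[wpow k.+1 _]/(zstar omega (wpow k (vof l))) -[wp' k.+1 l]/(zgen' 1 WL (wp' k l)).
by rewrite IH // omega_vof zstar_vof.
Qed.

Lemma theta_vof l : all (fun p => ~~ odd (mdeg' p.1)) l -> theta (vof l) = vof l.
Proof.
have -> : theta (vof l) = lin (fun k => (-1) ^+ mdeg k *: << k >>) (vof l).
  by rewrite /theta /lin; apply: eq_bigr => k _; rewrite scalerA mulrC.
elim: l => [|p l IH]; first by rewrite lin_nil vof_nil.
move=> /andP [hp hl].
rewrite lin_cons IH // vof_cons mdeg_mon -signr_odd (negbTE hp) expr0 scale1r.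
reflexivity.
Qed.

Lemma inVplus_vof l : all (fun p => ~~ odd (mdeg' p.1)) l -> inVplus (vof l).
Proof. by move=> h; rewrite /inVplus theta_vof. Qed.

Lemma homog_vof l : wf l -> all (fun p => mwt' p.1 == vwt' l) l -> homogeneous (vof l).
Proof.
move=> w h; rewrite /homogeneous /hwt vwt_vof // (perm_all _ (msupp_vof w)).
rewrite !all_map; apply: sub_all h => p /=; rewrite mwt_mon.
by [].
Qed.

Definition VL : ql := [:: ([::], qone)].
Lemma vac_vof : vac = vof VL.
Proof.
rewrite /vac /VL vof_cons vof_nil addr0 q2r1 scale1r.
have -> : mon [::] = @onecm nat.
  by apply/eqP/cmP => i; rewrite monE onecmE nth_nil.
reflexivity.
Qed.

Lemma vof_sub a b : vof a - vof b = vof (a ++ scl qm1 b).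
Proof. by rewrite vof_cat vof_scl q2rm1 scaleN1r. Qed.

Arguments mon : simpl never.
Arguments q2r : simpl never.
Arguments qadd : simpl never.
Arguments qmul : simpl never.

Arguments vof : simpl never.
Definition WIT : seq (Q * seq nat * seq nat) := [::
  (Qmake (Zneg 2629) 40, [:: 2]%N, [::]);
  (Qmake (Zpos 11849) 560, [:: 2]%N, [:: 2]%N);
  (Qmake (Zpos 22681) 56, [:: 2]%N, [:: 1; 1]%N);
  (Qmake (Zpos 140197) 280, [:: 2]%N, [:: 1; 0; 1]%N);
  (Qmake (Zpos 154437) 1904, [:: 2]%N, [:: 0; 2]%N);
  (Qmake (Zpos 1303) 40, [:: 2]%N, [:: 4]%N);
  (Qmake (Zpos 49881) 140, [:: 2]%N, [:: 1; 0; 0; 1]%N);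
  (Qmake (Zpos 18769) 280, [:: 2]%N, [:: 0; 1; 1]%N);
  (Qmake (Zpos 5317) 70, [:: 2]%N, [:: 3; 1]%N);
  (Qmake (Zneg 1823789) 7140, [:: 1; 1]%N, [::]);
  (Qmake (Zpos 39083) 120, [:: 1; 1]%N, [:: 2]%N);
  (Qmake (Zpos 2800277) 2380, [:: 1; 1]%N, [:: 1; 1]%N);
  (Qmake (Zpos 27809) 140, [:: 1; 1]%N, [:: 1; 0; 1]%N);
  (Qmake (Zpos 1779) 14, [:: 1; 1]%N, [:: 0; 2]%N);
  (Qmake (Zpos 229) 70, [:: 1; 1]%N, [:: 4]%N);
  (Qmake (Zneg 46048) 357, [:: 1; 0; 1]%N, [::]);
  (Qmake (Zneg 281149) 2856, [:: 0; 2]%N, [::]);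
  (Qmake (Zneg 22597) 840, [:: 1; 0; 1]%N, [:: 2]%N);
  (Qmake (Zpos 138043) 11424, [:: 0; 2]%N, [:: 2]%N);
  (Qmake (Zpos 45683) 280, [:: 1; 0; 1]%N, [:: 1; 1]%N);
  (Qmake (Zpos 144289) 1120, [:: 0; 2]%N, [:: 1; 1]%N);
  (Qmake (Zneg 2823) 112, [:: 4]%N, [:: 1; 1]%N);
  (Qmake (Zpos 30353) 595, [:: 1; 0; 0; 1]%N, [::]);
  (Qmake (Zneg 3727) 70, [:: 0; 1; 1]%N, [::]);
  (Qmake (Zneg 5499) 280, [:: 1; 0; 0; 1]%N, [:: 2]%N);
  (Qmake (Zpos 5238) 119, [:: 1; 0; 0; 0; 1]%N, [::])].

Definition JL : ql := [:: ([:: 4%N], qone); ([:: 1; 0; 1]%N, inject_Z (Zneg 2)); ([:: 0; 2]%N, Qmake (Zpos 3) 2)].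

Lemma hxV i : hx i = vof (mulx' i VL).
Proof. by rewrite -mulx_vof -vac_vof /vac mulr1. Qed.

Lemma q32 : 3 / 2 = q2r (Qmake (Zpos 3) 2).
Proof. by apply/eqP; vm_compute. Qed.

Lemma q2e : 2 = q2r (qn 2).
Proof. by rewrite q2r_qn. Qed.

Lemma scl_lit (c : rat) (q : Q) (l : ql) : c = q2r q -> c *: vof l = vof (scl q l).
Proof. by move=> ->; rewrite vof_scl. Qed.

Lemma vof_add a b : vof a + vof b = vof (a ++ b).
Proof. by rewrite vof_cat. Qed.

Lemma Jv_vof : Jv = vof JL.
Proof.
have e4 : hx 0 ^+ 4 = vof (mulx' 0 (mulx' 0 (mulx' 0 (mulx' 0 VL)))).
  rewrite (exprS _ 3) (exprS _ 2) (exprS _ 1) expr1 {4}(hxV 0) mulx_vof mulx_vof mulx_vof. exact: erefl.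
have e2 : hx 2 * hx 0 = vof (mulx' 2 (mulx' 0 VL)).
  rewrite (hxV 0) mulx_vof. exact: erefl.
have e1 : hx 1 * hx 1 = vof (mulx' 1 (mulx' 1 VL)).
  rewrite {2}(hxV 1) mulx_vof. exact: erefl.
rewrite /Jv e4 [X in _ - _ *: X]e2 [X in _ + _ *: X]e1.
rewrite [X in _ + X](scl_lit _ q32) [X in _ - X](scl_lit _ q2e) vof_sub vof_add.
apply: qdiff_ok; vm_compute; exact: erefl.
Qed.

Definition chkW (t : Q * seq nat * seq nat) : bool :=
  let u := [:: (t.1.2, qone)] in let v := [:: (t.2, qone)] in
  [&& wf u, all (fun p => mwt' p.1 == vwt' u) u, all (fun p => ~~ odd (mdeg' p.1)) u,
      all (fun p => ~~ odd (mdeg' p.1)) v & ok_z 2 u v].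

Lemma chkW_ok : all chkW WIT.
Proof. vm_compute; exact: erefl. Qed.

Definition SW : seq (rat * V * V) :=
  [seq (q2r t.1.1, vof [:: (t.1.2, qone)], vof [:: (t.2, qone)]) | t <- WIT].

Definition RL : ql :=
  flatten [seq scl t.1.1 (zgen' 2 [:: (t.1.2, qone)] [:: (t.2, qone)]) | t <- WIT].

Lemma SW_sum : \sum_(t <- SW) t.1.1 *: zcirc t.1.2 t.2 = vof RL.
Proof.
rewrite big_map /RL vof_flat; apply: eq_big_seq => t ht.
have /and5P [_ _ _ _ ok] := allP chkW_ok t ht.
by rewrite vof_scl zcirc_vof.
Qed.

Lemma SW_ok t : t \in SW -> [&& homogeneous t.1.2, inVplus t.1.2 & inVplus t.2].
Proof.
case/mapP => w hw ->.
have /and5P [w1 h1 e1 e2 _] := allP chkW_ok w hw.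
by rewrite homog_vof // !inVplus_vof.
Qed.

Lemma vof_catE a b : vof (a ++ scl qm1 b) = vof a - vof b.
Proof. by rewrite vof_sub. Qed.

Lemma lhs_eq (a b1 b2 b3 b4 d1 d2 d3 : ql) (q1 q2 q3 q4 q5 q6 q7 : Q)
  (r1 r2 r3 r4 r5 r6 r7 : rat) :
  r1 = q2r q1 -> r2 = q2r q2 -> r3 = q2r q3 -> r4 = q2r q4 ->
  r5 = q2r q5 -> r6 = q2r q6 -> r7 = q2r q7 ->
  vof a - ((r1 *: vof b1 - r2 *: vof b2 + r3 *: vof b3 - r4 *: vof b4)
           + (r5 *: vof d1 + r6 *: vof d2 - r7 *: vof d3))
  = vof (a ++ scl qm1 ((((scl q1 b1 ++ scl qm1 (scl q2 b2)) ++ scl q3 b3) ++ scl qm1 (scl q4 b4))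
                        ++ ((scl q5 d1 ++ scl q6 d2) ++ scl qm1 (scl q7 d3)))).
Proof.
move=> -> -> -> -> -> -> ->.
rewrite !(vof_catE, vof_cat, vof_scl). reflexivity.
Qed.

Lemma c1 : 1816 / 35 = q2r (Qmake (Zpos 1816) 35). Proof. by apply/eqP; vm_compute. Qed.
Lemma c2 : 212 / 5 = q2r (Qmake (Zpos 212) 5). Proof. by apply/eqP; vm_compute. Qed.
Lemma c3 : 89 / 10 = q2r (Qmake (Zpos 89) 10). Proof. by apply/eqP; vm_compute. Qed.
Lemma c4 : 27 / 70 = q2r (Qmake (Zpos 27) 70). Proof. by apply/eqP; vm_compute. Qed.
Lemma c5 : - (314 / 35) = q2r (Qmake (Zneg 314) 35). Proof. by apply/eqP; vm_compute. Qed.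
Lemma c6 : 89 / 14 = q2r (Qmake (Zpos 89) 14). Proof. by apply/eqP; vm_compute. Qed.

Theorem proposition4p1 :
  inO_Vplus
    (zstar Jv Jv -
     (((1816 / 35) *: wpow 4 vac - (212 / 5) *: wpow 3 vac
       + (89 / 10) *: wpow 2 vac - (27 / 70) *: wpow 1 vac)
      + ((- (314 / 35)) *: wpow 2 Jv + (89 / 14) *: wpow 1 Jv
         - (27 / 70) *: wpow 0 Jv))).
Proof.
exists SW; split; first exact: SW_ok.
apply: (eq_trans _ (esym SW_sum)).
rewrite Jv_vof vac_vof.
rewrite zstar_vof; last by vm_compute.
rewrite (@wpow_vof 4 VL); last by vm_compute.
rewrite (@wpow_vof 3 VL); last by vm_compute.
rewrite (@wpow_vof 2 VL); last by vm_compute.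
rewrite (@wpow_vof 1 VL); last by vm_compute.
rewrite (@wpow_vof 2 JL); last by vm_compute.
rewrite (@wpow_vof 1 JL); last by vm_compute.
rewrite (@wpow_vof 0 JL); last by [].

apply: eq_trans (lhs_eq _ _ _ _ _ _ _ _ c1 c2 c3 c4 c5 c6 c4) _.
apply: qdiff_ok.
vm_compute.
exact: erefl.
Qed.
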